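(* Let $q$ be a power of an odd prime $p$ and let $\chi$ be a non-trivial multiplicative character of $\mathbb{F}_q$. Then for any subsets $A,B \subseteq \mathbb{F}_q$, $$\bigg|\sum_{a\in A,\, b\in B}\chi(a+b)\bigg| \leq \sqrt{q|A||B|}\Big(1-\frac{|A|}{q}\Big)^{1/2}\Big(1-\frac{|B|}{q}\Big)^{1/2}.$$
   Context: Multiplicative characters of $\mathbb{F}_q$ are homomorphisms $\mathbb{F}_q^*\to\mathbb{C}^*$, extended by $\chi(0)=0$. *)

(* Defs.v *)
From mathcomp Require Import all_boot all_order all_algebra all_field.
Set Implicit Arguments. Unset Strict Implicit. Unset Printing Implicit Defensive.
Import Order.TTheory GRing.Theory Num.Theory.
Local Open Scope ring_scope.

(* A multiplicative character of a finite field F: a group homomorphism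
   F^* -> C^*, extended by chi 0 = 0.  Complex values are modelled in algC
   (characters of finite groups take values in roots of unity, which lie
   in algC). *)
Definition mult_char (F : finFieldType) (chi : F -> algC) : Prop :=
  [/\ chi 0 = 0,
      (forall x, x != 0 -> chi x != 0) &
      (forall x y, x != 0 -> y != 0 -> chi (x * y) = chi x * chi y)].

Definition nontrivial_char (F : finFieldType) (chi : F -> algC) : Prop :=
  exists x : F, x != 0 /\ chi x != 1.

(* Main.v *)
Require Import Defs.
From mathcomp Require Import all_boot all_order all_algebra all_field.
From mathcomp Require Import ring.
Import Order.TTheory GRing.Theory Num.Theory.
Local Open Scope ring_scope.
Lemma sum2 (I : finType) (f g : I -> algC) :
  \sum_i \sum_j f i * g j = (\sum_i f i) * (\sum_j g j).
Proof. rewrite mulr_suml; apply: eq_bigr => i _; by rewrite mulr_sumr. Qed.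

Lemma sum2' (I : finType) (f g : I -> algC) :
  \sum_i \sum_j f j * g i = (\sum_i f i) * (\sum_j g j).
Proof. by rewrite exchange_big sum2. Qed.

Lemma cauchy_schwarz (I : finType) (u v : I -> algC) :
  `|\sum_i u i * (v i)^*| ^+ 2 <= (\sum_i `|u i| ^+ 2) * (\sum_i `|v i| ^+ 2).
Proof.
set W := \sum_i u i * (v i)^*.
have E : forall i j, `|u i * v j - u j * v i| ^+ 2 =
   `|u i| ^+ 2 * `|v j| ^+ 2 + `|u j| ^+ 2 * `|v i| ^+ 2
   - (u i * (v i)^*) * (v j * (u j)^*) - (u j * (v j)^*) * (v i * (u i)^*).
  move=> i j; rewrite !normCK rmorphB !rmorphM /=; ring.
have H0 : 0 <= \sum_i \sum_j `|u i * v j - u j * v i| ^+ 2.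
  by apply: sumr_ge0 => i _; apply: sumr_ge0 => j _; apply: exprn_ge0.
have HW : \sum_i v i * (u i)^* = W^*.
  by rewrite /W rmorph_sum; apply: eq_bigr => i _; rewrite rmorphM /= conjCK mulrC.
have Hs : \sum_i \sum_j `|u i * v j - u j * v i| ^+ 2 =
  2%:R * ((\sum_i `|u i| ^+ 2) * (\sum_i `|v i| ^+ 2) - W * W^*).
  under eq_bigr => i _ do (under eq_bigr => j _ do rewrite E; rewrite !sumrB big_split /=).
  rewrite !sumrB big_split /= sum2 sum2' sum2 sum2' HW.
  rewrite -/W; ring.
rewrite Hs in H0.
rewrite normCK.
move: H0; rewrite pmulr_rge0 ?ltr0n // subr_ge0.
by rewrite mulrC.
Qed.

Section Char.
Variables (F : finFieldType) (chi : F -> algC).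
Hypothesis hchi : mult_char chi.
Hypothesis hnt : nontrivial_char chi.

Lemma chi0 : chi 0 = 0. Proof. by case: hchi. Qed.
Lemma chinz x : x != 0 -> chi x != 0. Proof. by case: hchi => _ H _; apply: H. Qed.
Lemma chiM x y : x != 0 -> y != 0 -> chi (x * y) = chi x * chi y.
Proof. by case: hchi => _ _ H; apply: H. Qed.
Lemma chiM' g x : g != 0 -> chi (g * x) = chi g * chi x.
Proof.
move=> g0; case: (eqVneq x 0) => [->|x0]; first by rewrite mulr0 chi0 mulr0.
exact: chiM.
Qed.
Lemma chi1 : chi 1 = 1.
Proof.
have h := @chiM 1 1 (oner_neq0 _) (oner_neq0 _); rewrite mulr1 in h.
apply: (mulfI (@chinz 1 (oner_neq0 _))); by rewrite mulr1 -h.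
Qed.
Lemma chiX x n : x != 0 -> chi (x ^+ n) = chi x ^+ n.
Proof.
move=> x0; elim: n => [|n IH]; first by rewrite !expr0 chi1.
by rewrite !exprS chiM ?IH // expf_neq0.
Qed.
Lemma chi_norm x : x != 0 -> chi x * (chi x)^* = 1.
Proof.
move=> x0.
have n0 : (0 < #|F|.-1)%N by rewrite -(cardC1 0); apply/card_gt0P; exists x.
have e : x ^+ #|F|.-1 = 1.
  apply: (mulIf x0); rewrite mul1r -exprSr prednK ?expf_card //.
  by apply: leq_trans n0 _; exact: leq_pred.
have : `|chi x| ^+ #|F|.-1 == 1 by rewrite -normrX -chiX // e chi1 normr1.
rewrite pexpr_eq1 // => /eqP h.
by rewrite -normCK h expr1n.
Qed.
Lemma sum_chi : \sum_x chi x = 0.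
Proof.
case: hnt => g [g0 g1].
have h : \sum_x chi x = chi g * \sum_x chi x.
  rewrite {1}(reindex_inj (mulfI g0)) /= mulr_sumr; apply: eq_bigr => x _.
  exact: chiM'.
have : (chi g - 1) * \sum_x chi x == 0 by rewrite mulrBl -h mul1r subrr.
by rewrite mulf_eq0 subr_eq0 (negPf g1) /= => /eqP.
Qed.
Lemma sum_shift (G : F -> algC) b : \sum_x G (x + b) = \sum_x G x.
Proof. by rewrite [RHS](reindex_inj (addIr b)). Qed.

Lemma K_nz d : d != 0 -> \sum_x chi x * (chi (x + d))^* = -1.
Proof.
move=> d0.
have key : forall x, x != 0 -> chi x * (chi (x + d))^* = (chi (1 + d * x^-1))^*.
  move=> x x0.
  have -> : x + d = x * (1 + d * x^-1) by rewrite mulrDr mulr1 mulrCA mulfV // mulr1.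
  case: (eqVneq (1 + d * x^-1) 0) => [->|y0]; first by rewrite mulr0 chi0 rmorph0 mulr0.
  by rewrite chiM // rmorphM /= mulrA chi_norm // mul1r.
have hinj : injective (fun x : F => 1 + d * x^-1).
  by move=> x y /addrI /(mulfI d0) /invr_inj.
have S0 : \sum_x (chi (1 + d * x^-1))^* = 0.
  rewrite -rmorph_sum.
  have := reindex_inj hinj (F := fun y => chi y) (P := xpredT) (op := +%R) (x := 0) => /= <-.
  by rewrite sum_chi rmorph0.
rewrite (bigD1 0) //= invr0 mulr0 addr0 chi1 rmorph1 in S0.
rewrite (bigD1 0) //= chi0 mul0r add0r.
rewrite (eq_bigr (fun x => (chi (1 + d * x^-1))^*)); last by move=> x; apply: key.
by apply/eqP; rewrite -addr_eq0 addrC S0.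
Qed.

Lemma K0 : \sum_x chi x * (chi (x + 0))^* = #|F|%:R - 1.
Proof.
rewrite (bigD1 0) //= addr0 chi0 mul0r add0r.
rewrite (eq_bigr (fun _ => 1)); last by move=> x x0; rewrite addr0 chi_norm.
rewrite sumr_const.
have -> : #|[pred i | i != 0 :> F]| = #|F|.-1 by rewrite -(cardC1 0).
have hF : (0 < #|F|)%N by apply/card_gt0P; exists 0.
by rewrite -{2}(prednK hF) mulrS; rewrite [RHS]addrC addKr.
Qed.

Lemma K b b' : \sum_x chi (x + b) * (chi (x + b'))^* =
  if b == b' then #|F|%:R - 1 else -1.
Proof.
transitivity (\sum_x (fun y => chi y * (chi (y + (b' - b)))^*) (x + b)).
  by apply: eq_bigr => x _ /=; have -> : x + b + (b' - b) = x + b' by ring.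
rewrite (sum_shift (fun y => chi y * (chi (y + (b' - b)))^*) b); case: (eqVneq b b') => [->|ne]; first by rewrite subrr K0.
by apply: K_nz; rewrite subr_eq0 eq_sym.
Qed.
End Char.

Theorem theorem1p14 (F : finFieldType) (p : nat)
  (hp : prime p) (hodd : odd p) (hchar : p \in [pchar F])
  (chi : F -> algC) (hchi : mult_char chi) (hnt : nontrivial_char chi)
  (A B : {set F}) :
  `| \sum_(a in A) \sum_(b in B) chi (a + b) |
    <= sqrtC (#|F|%:R * #|A|%:R * #|B|%:R)
       * sqrtC (1 - #|A|%:R / #|F|%:R)
       * sqrtC (1 - #|B|%:R / #|F|%:R).
Proof.
set q : algC := #|F|%:R; set nA : algC := #|A|%:R; set nB : algC := #|B|%:R.
have hF : (0 < #|F|)%N by apply/card_gt0P; exists 0.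
have q0 : 0 < q by rewrite ltr0n.
have qn0 : q != 0 by rewrite gt_eqF.
pose f x := \sum_(b in B) chi (x + b).
have Sf : \sum_x f x = 0.
  rewrite /f exchange_big /=; apply: big1 => b _.
  by rewrite (@sum_shift _ chi) (@sum_chi _ _ hchi hnt).
pose u x : algC := (x \in A)%:R - nA / q.
have Su : \sum_x u x * f x = \sum_(a in A) f a.
  rewrite /u; under eq_bigr => x _ do rewrite mulrBl.
  rewrite sumrB -mulr_sumr Sf mulr0 subr0 [RHS]big_mkcond; apply: eq_bigr => x _.
  by case: (x \in A); rewrite ?mul1r ?mul0r.
have CS : `|\sum_x u x * f x| ^+ 2 <= (\sum_x `|u x| ^+ 2) * (\sum_x `|f x| ^+ 2).
  have := @cauchy_schwarz _ u (fun x => (f x)^*) => /=.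
  have E1 : \sum_x u x * (f x)^*^* = \sum_x u x * f x.
    by apply: eq_bigr => x _; rewrite conjCK.
  have E2 : \sum_x `|(f x)^*| ^+ 2 = \sum_x `|f x| ^+ 2.
    by apply: eq_bigr => x _; rewrite norm_conjC.
  by rewrite E1 E2.
rewrite Su in CS.
have Hu : \sum_x `|u x| ^+ 2 = nA * (1 - nA / q).
  transitivity (\sum_x (((x \in A)%:R : algC) * (1 - 2%:R * (nA / q)) + (nA / q) ^+ 2)).
    apply: eq_bigr => x _; rewrite real_normK; last by rewrite rpredB ?rpred_div ?realn.
    by rewrite /u; case: (x \in A) => /=; ring.
  rewrite big_split /= -mulr_suml sumr_const.
  have -> : \sum_x ((x \in A)%:R : algC) = nA.
    rewrite (eq_bigr (fun x => if x \in A then 1 else 0)); last by move=> x _; case: (x \in A).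
    by rewrite -big_mkcond sumr_const.
  rewrite [#|_|](_ : _ = #|F|); last by apply: eq_card.
  rewrite -mulr_natr -/q; field; exact: qn0.
have Hf : \sum_x `|f x| ^+ 2 = q * nB - nB ^+ 2.
  transitivity (\sum_x \sum_(b in B) \sum_(b' in B) chi (x + b) * (chi (x + b'))^*).
    apply: eq_bigr => x _; rewrite normCK /f rmorph_sum mulr_suml; apply: eq_bigr => b _.
    by rewrite mulr_sumr.
  rewrite exchange_big /=; under eq_bigr => b _ do rewrite exchange_big /=.
  under eq_bigr => b _ do under eq_bigr => b' _ do rewrite (@K _ _ hchi hnt).
  transitivity (\sum_(b in B) (q - nB)).
    apply: eq_bigr => b bB; rewrite (bigD1 b) //= eqxx.
    rewrite (eq_bigr (fun _ => -1)); last by move=> b' /andP[_ ne]; rewrite eq_sym (negPf ne).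
    rewrite sumr_const; set m := #|_|.
    have hm : #|B| = m.+1.
      by rewrite (cardD1 b) bB /m add1n; congr (_.+1); apply: eq_card => y; rewrite !inE andbC.
    by rewrite /nB hm -/q mulNrn (mulrS 1 m); ring.
  by rewrite sumr_const -mulr_natr -/nB; ring.
rewrite Hu Hf in CS.
have a1 : 0 <= 1 - nA / q by rewrite subr_ge0 ler_pdivrMr // mul1r ler_nat max_card.
have b1 : 0 <= 1 - nB / q by rewrite subr_ge0 ler_pdivrMr // mul1r ler_nat max_card.
have M0 : 0 <= q * nA * nB by rewrite !mulr_ge0 ?ler0n.
rewrite -!sqrtCM ?nnegrE ?mulr_ge0 //.
rewrite -(sqrCK (normr_ge0 _)) ler_sqrtC ?nnegrE ?exprn_ge0 ?normr_ge0 ?mulr_ge0 //.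
apply: le_trans CS _; rewrite le_eqVlt; apply/orP; left; apply/eqP; field.
exact: qn0.
Qed.
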